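(* A graph $G$ is an iso-unique Grundy domination graph if and only if each connected component of $G$ is a complete graph.
   Context: For a graph $G$, $N(v)$ is the open neighborhood and $N[v]=N(v)\cup\{v\}$ the closed neighborhood of $v$. A sequence $(v_1,\ldots,v_k)$ of distinct vertices is a closed neighborhood sequence if $N[v_i]\setminus\bigcup_{j=1}^{i-1}N[v_j]\neq\emptyset$ for each $i\in[k]$. The Grundy domination number $\gamma_{gr}(G)$ is the maximum length of a closed neighborhood sequence; the set of vertices of a closed neighborhood sequence of length $\gamma_{gr}(G)$ is a Grundy dominating set. $G$ is an iso-unique Grundy domination graph if for every two Grundy dominating sets $A,B$ of $G$ there is an automorphism $\phi$ of $G$ with $\phi(A)=B$. *)

(* Defs.v *)
From mathcomp Require Import all_boot.
From mathcomp Require Import perm.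
Set Implicit Arguments. Unset Strict Implicit. Unset Printing Implicit Defensive.

Definition simple_graph (T : finType) (e : rel T) : Prop :=
  symmetric e /\ irreflexive e.

Definition cnbhd (T : finType) (e : rel T) (v : T) : {set T} :=
  [set u | (u == v) || e v u].

Definition closed_nbhd_seq (T : finType) (e : rel T) (s : seq T) : Prop :=
  uniq s /\
  forall x0 : T, forall i, i < size s ->
    cnbhd e (nth x0 s i) :\: (\bigcup_(j < i) cnbhd e (nth x0 s j)) != set0.

Definition grundy_dominating_set (T : finType) (e : rel T) (A : {set T}) : Prop :=
  exists s : seq T, [/\ closed_nbhd_seq e s, A = [set x in s] &
    forall s' : seq T, closed_nbhd_seq e s' -> size s' <= size s].

Definition graph_automorphism (T : finType) (e : rel T) (phi : {perm T}) : Prop :=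
  forall x y, e (phi x) (phi y) = e x y.

Definition iso_unique_grundy (T : finType) (e : rel T) : Prop :=
  forall A B : {set T}, grundy_dominating_set e A -> grundy_dominating_set e B ->
    exists phi : {perm T}, graph_automorphism e phi /\ phi @: A = B.

Definition components_complete (T : finType) (e : rel T) : Prop :=
  forall x y : T, connect e x y -> x != y -> e x y.

(* Main.v *)
Require Import Defs.
From mathcomp Require Import all_boot.
From mathcomp Require Import perm.
Set Implicit Arguments. Unset Strict Implicit. Unset Printing Implicit Defensive.

Section G.
Variable T : finType.
Variable e : rel T.
Hypothesis esym : symmetric e.
Hypothesis eirr : irreflexive e.

Local Notation N := (cnbhd e).

Definition dom (s : seq T) : {set T} := \bigcup_(y <- s) N y.

Fixpoint okb (D : {set T}) (s : seq T) : bool :=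
  if s is x :: s' then ~~ (N x \subset D) && okb (D :|: N x) s' else true.

Lemma inN x : x \in N x.
Proof. by rewrite inE eqxx. Qed.

Lemma mem_dom z s : (z \in dom s) = has (fun y => z \in N y) s.
Proof.
elim: s => [|y s IH]; first by rewrite /dom big_nil inE.
by rewrite /dom big_cons in_setU -/(dom s) IH.
Qed.

Lemma N_sub_dom y s : y \in s -> N y \subset dom s.
Proof.
move=> ys; apply/subsetP => z zN; rewrite mem_dom; apply/hasP; by exists y.
Qed.

Lemma okb_gen x0 D s :
  (forall i, i < size s -> N (nth x0 s i) :\: (D :|: \bigcup_(j < i) N (nth x0 s j)) != set0)
  <-> okb D s.
Proof.
elim: s D => [|x s IH] D /=; first by split.
split.
- move=> H; apply/andP; split.
    by have := H 0 isT; rewrite big_ord0 setU0 -setD_eq0.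
  apply/IH => i Hi; have := H i.+1 Hi.
  by rewrite big_ord_recl /= setUA.
- move/andP=> [H1 /IH H2] [|i] /=; first by rewrite big_ord0 setU0 setD_eq0.
  by move=> Hi; rewrite big_ord_recl /= setUA; apply: H2.
Qed.

Lemma okb_notsub D s y : okb D s -> y \in s -> ~~ (N y \subset D).
Proof.
elim: s D => [|x s IH] D //= /andP[H1 H2]; rewrite inE => /orP[/eqP->//|ys].
apply: contra (IH _ H2 ys) => sub; apply: subset_trans sub _; exact: subsetUl.
Qed.

Lemma okb_uniq D s : okb D s -> uniq s.
Proof.
elim: s D => [|x s IH] D //= /andP[H1 H2]; rewrite (IH _ H2) andbT.
apply/negP => xs; have := okb_notsub H2 xs; by rewrite subsetUr.
Qed.

Lemma cns_okb s : closed_nbhd_seq e s <-> okb set0 s.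
Proof.
split.
- case: s => [|x s] // [_ H]; apply/(okb_gen x) => i Hi; rewrite set0U; exact: H.
- move=> H; split; first exact: okb_uniq H.
  move=> x0 i Hi; rewrite -[\bigcup_(j < i) _]set0U; move: i Hi; exact/(okb_gen x0).
Qed.

Lemma okb_cat D s1 s2 : okb D (s1 ++ s2) = okb D s1 && okb (D :|: dom s1) s2.
Proof.
elim: s1 D => [|x s IH] D /=; first by rewrite /dom big_nil setU0.
by rewrite IH /dom big_cons setUA andbA.
Qed.

Lemma okb_rcons D s z : okb D (rcons s z) = okb D s && ~~ (N z \subset D :|: dom s).
Proof. by rewrite -cats1 okb_cat /= andbT. Qed.

Definition maxs s := okb set0 s /\ forall s', okb set0 s' -> size s' <= size s.

Lemma maxs_dom s c : maxs s -> c \in dom s.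
Proof.
move=> [H1 H2]; apply/negPn/negP => cn.
have : okb set0 (rcons s c).
  rewrite okb_rcons H1 /= set0U; apply/negP => /subsetP/(_ c (inN c)); exact/negP.
by move/H2; rewrite size_rcons ltnn.
Qed.

Lemma exists_max : exists s, maxs s.
Proof.
pose P n := [exists t : n.-tuple T, okb set0 t].
have P0 : P 0 by apply/existsP; exists [tuple].
have Pb : forall n, P n -> n <= #|T|.
  move=> n /existsP[t /okb_uniq u]; rewrite -(size_tuple t) -(card_uniqP u).
  exact: max_card.
case: (ex_maxnP (ex_intro _ 0 P0) Pb) => m /existsP[t Ht] Hm.
exists t; split => // s' Hs'; rewrite size_tuple; apply: Hm.
by apply/existsP; exists (in_tuple s').
Qed.

Lemma grundy_maxs A : grundy_dominating_set e A -> exists s, maxs s /\ A = [set x in s].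
Proof.
move=> [s [/cns_okb H1 H2 H3]]; exists s; split=> //; split=> // s' /cns_okb; exact: H3.
Qed.

Lemma maxs_grundy s : maxs s -> grundy_dominating_set e [set x in s].
Proof.
move=> [H1 H2]; exists s; split=> //; first exact/cns_okb.
by move=> s' /cns_okb; exact: H2.
Qed.


Lemma okb_sameN D s x y : okb D s -> x \in s -> y \in s -> N x = N y -> x = y.
Proof.
elim: s D => [|z s IH] D //= /andP[H1 H2]; rewrite !inE.
move=> /orP[/eqP->|xs] /orP[/eqP->|ys] Nxy //.
- have := okb_notsub H2 ys; by rewrite -Nxy subsetUr.
- have := okb_notsub H2 xs; by rewrite Nxy subsetUr.
- exact: IH H2 xs ys Nxy.
Qed.

Hypothesis cc : components_complete e.

Let csym : connect_sym e := sym_connect_sym esym.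

Lemma N_conn a : N a = [set z | connect e a z].
Proof.
apply/setP => z; rewrite !inE; apply/idP/idP.
- by case/orP => [/eqP->|/connect1].
- move=> c; case: (eqVneq z a) => //= za; apply: cc => //; by rewrite eq_sym.
Qed.

Lemma conn_N a z : z \in N a -> connect e a z.
Proof. by rewrite N_conn inE. Qed.

Section Rep.
Variable A : {set T}.
Hypothesis P1 : forall a a', a \in A -> a' \in A -> connect e a a' -> a = a'.
Hypothesis P2 : forall c, exists2 a, a \in A & connect e c a.

Definition rep x := odflt x [pick y in A | connect e x y].

Lemma rep_spec x : rep x \in A /\ connect e x (rep x).
Proof.
rewrite /rep; case: pickP => [y /andP[]//|/= H].
have [a aA ca] := P2 x; by have := H a; rewrite aA ca.
Qed.

Lemma rep_conn x y : connect e x y -> rep x = rep y.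
Proof.
move=> cxy; have [Ax cx] := rep_spec x; have [Ay cy] := rep_spec y.
apply: P1 => //; rewrite csym in cx; apply: connect_trans cx _; exact: connect_trans cxy cy.
Qed.

Lemma rep_id a : a \in A -> rep a = a.
Proof. move=> aA; have [Ar ca] := rep_spec a; apply: P1 => //; by rewrite csym. Qed.
End Rep.

Lemma maxs_P1 s a a' : maxs s -> a \in s -> a' \in s -> connect e a a' -> a = a'.
Proof.
move=> [H _] sa sa2 caa; apply: okb_sameN H sa sa2 _.
rewrite !N_conn; apply/setP => z; rewrite !inE; exact: (same_connect csym caa z).
Qed.

Lemma maxs_P2 s c : maxs s -> exists2 a, a \in s & connect e c a.
Proof.
move=> /(maxs_dom c); rewrite mem_dom => /hasP[y ys /conn_N cyc].
by exists y => //; rewrite csym.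
Qed.

Lemma backward : iso_unique_grundy e.
Proof.
move=> A B /grundy_maxs[s [Ms ->]] /grundy_maxs[t [Mt ->]].
set SA := [set x in s]; set SB := [set x in t].
have A1 : forall a a', a \in SA -> a' \in SA -> connect e a a' -> a = a'.
  move=> a a'; rewrite !inE; exact: maxs_P1.
have A2 : forall c, exists2 a, a \in SA & connect e c a.
  by move=> c; have [a] := maxs_P2 c Ms; exists a; rewrite ?inE.
have B1 : forall a a', a \in SB -> a' \in SB -> connect e a a' -> a = a'.
  move=> a a'; rewrite !inE; exact: maxs_P1.
have B2 : forall c, exists2 a, a \in SB & connect e c a.
  by move=> c; have [a] := maxs_P2 c Mt; exists a; rewrite ?inE.
pose ra := rep SA; pose rb := rep SB.
pose f x := tperm (ra x) (rb x) x.
have cf : forall x, connect e x (f x).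
  move=> x; rewrite /f; case: tpermP => [_|_|_ _].
  - exact: (rep_spec B2 x).2.
  - exact: (rep_spec A2 x).2.
  - exact: connect0.
have ceq : forall x y, connect e x y -> ra x = ra y /\ rb x = rb y.
  by move=> x y c; split; apply: rep_conn.
have finj : injective f.
  move=> x y fxy; have cxy : connect e x y.
    apply: connect_trans (cf x) _; rewrite fxy csym; exact: cf.
  have [ea eb] := ceq _ _ cxy; move: fxy; rewrite /f ea eb; exact: perm_inj.
exists (perm finj); split.
- move=> x y; rewrite !permE.
  have cxy : connect e x y = connect e (f x) (f y).
    apply/idP/idP => c.
    + apply: connect_trans (cf y); apply: connect_trans c.
      by rewrite csym; apply: cf.
    + apply: connect_trans (cf x) _; apply: connect_trans c _; rewrite csym; exact: cf.
  have exy : forall a b, e a b = connect e a b && (a != b).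
    move=> a b; apply/idP/idP => [H|/andP[H1 H2]]; last exact: cc.
    rewrite connect1 //=; apply/eqP => ab; by rewrite ab eirr in H.
  by rewrite !exy cxy (inj_eq finj).
- apply/setP => b; apply/imsetP/idP => [[a aA ->]|bB].
  + rewrite permE /f /ra /rb (rep_id A1 A2 aA) tpermL; exact: (rep_spec B2 a).1.
  + have [ra_in cbr] := rep_spec A2 b; exists (ra b) => //.
    rewrite permE /f /ra /rb (rep_id A1 A2 ra_in) tpermL; rewrite -(rep_conn B1 B2 cbr).
    by rewrite (rep_id B1 B2 bB).
Qed.

End G.

Section F.
Variable T : finType.
Variable e : rel T.
Hypothesis esym : symmetric e.
Hypothesis eirr : irreflexive e.
Local Notation N := (cnbhd e).
Local Notation dom := (dom e).
Local Notation okb := (okb e).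
Local Notation maxs := (maxs e).

Let csym : connect_sym e := sym_connect_sym esym.

Lemma conn_N0 y z : z \in N y -> connect e y z.
Proof. by rewrite inE => /orP[/eqP->|/connect1]. Qed.

Lemma okb_disj (X D : {set T}) (t : seq T) : (forall y z, y \in t -> z \in N y -> z \notin X) ->
  okb (D :|: X) t = okb D t.
Proof.
elim: t D => [|y t IH] D //= H.
rewrite -setUA [X :|: _]setUC setUA IH; last by move=> a b at0; apply: H; rewrite inE at0 orbT.
congr (~~ _ && _); apply/idP/idP => sub; last exact: subset_trans sub (subsetUl _ _).
apply/subsetP => z zN; have := subsetP sub z zN; rewrite in_setU => /orP[//|zX].
by have := H y z (mem_head _ _) zN; rewrite zX.
Qed.

Section Split.
Variable C : {set T}.
Hypothesis NC : forall y z, y \in C -> z \in N y -> z \in C.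
Hypothesis NnC : forall y z, y \notin C -> z \in N y -> z \notin C.

Lemma okb_split D s :
  okb D s = okb D (filter (mem C) s) && okb D (filter (predC (mem C)) s).
Proof.
elim: s D => [|x s IH] D //=.
case: ifP => xC /=.
- rewrite IH (@okb_disj _ _ [seq x <- s | predC (mem C) x]) ?andbA // => y z; rewrite mem_filter => /andP[yC _] zN.
  apply/negP => zx; have := NC xC zx; by rewrite (negbTE (NnC yC zN)).
- rewrite IH (@okb_disj _ _ [seq x <- s | mem C x]) ; first by rewrite andbA [X in X && _]andbC -andbA.
  move=> y z; rewrite mem_filter => /andP[yC _] zN.
  apply/negP => zx; have := NnC (negbT xC) zx; by rewrite (NC yC zN).
Qed.
End Split.

Lemma rconsP (l : seq T) : l != [::] -> exists t1 v, l = rcons t1 v.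
Proof. by case/lastP: l => // t1 v _; exists t1, v. Qed.

Definition Pset (A : {set T}) :=
  [set p : T * T | [&& p.1 \in A, p.2 \in A & e p.1 p.2]].

Lemma P_le (phi : {perm T}) A : graph_automorphism e phi ->
  #|Pset A| <= #|Pset (phi @: A)|.
Proof.
move=> aut.
have inj : injective (fun p : T * T => (phi p.1, phi p.2)).
  by move=> [a b] [c d] /= [/perm_inj -> /perm_inj ->].
rewrite -(card_imset (Pset A) inj); apply: subset_leq_card.
apply/subsetP => q /imsetP[[a b] + ->]; rewrite !inE /= => /and3P[aA bA eab].
by rewrite aut eab !imset_f.
Qed.

Lemma forward : iso_unique_grundy e -> components_complete e.
Proof.
move=> iso x0 y0 c0 ne0; apply/negPn/negP => nexy.
pose C := [set z | connect e x0 z].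
have NC : forall y z, y \in C -> z \in N y -> z \in C.
  move=> y z yC /conn_N0 cyz; move: yC; rewrite !inE => cy; exact: connect_trans cy cyz.
have NnC : forall y z, y \notin C -> z \in N y -> z \notin C.
  move=> y z yC /conn_N0 cyz; move: yC; rewrite !inE => cy; apply: contra cy => cz.
  by apply: connect_trans cz _; rewrite csym.
have [s [Hs Ms]] := exists_max e.
pose fC := filter (mem C) s; pose fO := filter (predC (mem C)) s.
have okt : okb set0 (fO ++ fC).
  move: Hs; rewrite (okb_split NC NnC) okb_cat -[dom _]set0U okb_disj 1?andbC //.
  move=> y z; rewrite mem_filter => /andP[yC _] zN; rewrite set0U mem_dom.
  apply/hasP => -[y' ]; rewrite mem_filter => /andP[y'C _] zN'.
  have := NC _ _ yC zN; by rewrite (negbTE (NnC _ _ y'C zN')).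
have szt : size (fO ++ fC) = size s.
  by rewrite size_cat !size_filter addnC count_predC.
have fCne : fC != [::].
  have := maxs_dom x0 (conj Hs Ms); rewrite mem_dom => /hasP[y ys /conn_N0 cyx].
  apply/negP => /eqP E; have yC : y \in C by rewrite inE csym.
  have : y \in fC by rewrite mem_filter ys andbT; exact: yC.
  by rewrite E.
have [t1 [v Ev]] := rconsP fCne.
have vC : v \in C.
  have : v \in fC by rewrite Ev mem_rcons mem_head.
  by rewrite mem_filter => /andP[].
pose t0 := fO ++ t1.
have okv : okb set0 (rcons t0 v) by rewrite /t0 rcons_cat -Ev.
pose D := dom t0.
have Hz : forall z, ~~ (N z \subset D) -> maxs (rcons t0 z).
  move=> z nz; split.
    by move: okv; rewrite !okb_rcons set0U /= => /andP[-> _].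
  move=> s1 /Ms; rewrite -szt Ev size_cat !size_rcons size_cat addnS; exact.
have Hb : forall z c, ~~ (N z \subset D) -> (c \in D) || (c \in N z).
  move=> z1 c1 /Hz /(maxs_dom c1); by rewrite mem_dom has_rcons -mem_dom orbC.
have [u0 u0N u0D] : exists2 u0, u0 \in N v & u0 \notin D.
  by apply/subsetPn; move: okv; rewrite okb_rcons set0U => /andP[].
have u0C : u0 \in C by apply: NC vC u0N.
case: (boolP [exists u, exists w, [&& u \notin D, w \in D & e u w]]) => [|nex].
- move=> /existsP[u /existsP[w /and3P[uD wD euw]]].
  have nuD : ~~ (N u \subset D) by apply/subsetPn; exists u => //; exact: inN.
  have nwD : ~~ (N w \subset D).
    by apply/subsetPn; exists u => //; rewrite inE esym euw orbT.
  have [psi [aut img]] := iso _ _ (maxs_grundy (Hz _ nwD)) (maxs_grundy (Hz _ nuD)).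
  have := P_le [set z in rcons t0 w] aut; rewrite img.
  set A1 := [set z in rcons t0 u]; set A2 := [set z in rcons t0 w].
  move=> Hle; suff Hlt : #|Pset A1| < #|Pset A2| by move: Hle; rewrite leqNgt Hlt.
  apply: proper_card; apply/properP; split.
  + have noadj : forall y, y \in t0 -> ~~ e y u /\ y != u.
      move=> y yt; have sub := subsetP (N_sub_dom e yt) u.
      have : u \notin N y by apply: contra uD; exact: sub.
      by rewrite inE negb_or eq_sym => /andP[-> ->].
    apply/subsetP => -[a b]; rewrite !inE /= !mem_rcons !inE.
    case: (eqVneq a u) => [->|au] /=; case: (eqVneq b u) => [->|bu] //=.
    * by rewrite eirr.
    * move=> /andP[bt eub]; have [] := noadj b bt; by rewrite esym eub.
    * move=> /andP[at0 eau]; have [] := noadj a at0; by rewrite eau.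
    * by move=> /and3P[-> -> ->]; rewrite !orbT.
  + have := wD; rewrite mem_dom => /hasP[y yt wNy].
    have wt : w \notin t0.
      apply/negP => wt; have := subsetP (N_sub_dom e wt) u.
      by rewrite inE esym euw orbT (negbTE uD) => /(_ isT).
    have wy : w != y by apply: contraNneq wt => ->.
    exists (w, y); rewrite !inE /= !mem_rcons !inE ?eqxx ?yt /=.
      by move: wNy; rewrite inE (negbTE wy) /= esym orbT.
    rewrite (negbTE wt) orbF; apply/negP => /andP[/eqP wu _].
    by move: uD; rewrite -wu wD.
- have cl : closed e [pred z | z \notin D].
    move=> a b eab; rewrite !inE; apply/idP/idP => H; apply/negP => H2.
    + by move: nex => /existsPn/(_ a)/existsPn/(_ b); rewrite H H2 eab.
    + by move: nex => /existsPn/(_ b)/existsPn/(_ a); rewrite H H2 esym eab.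
  have cu0x : connect e u0 x0 by rewrite csym; move: u0C; rewrite inE.
  have x0D : x0 \notin D by have := closed_connect cl cu0x; rewrite !inE u0D.
  have y0D : y0 \notin D.
    by have := closed_connect cl (connect_trans cu0x c0); rewrite !inE u0D.
  have nx : ~~ (N x0 \subset D) by apply/subsetPn; exists x0 => //; exact: inN.
  have := Hb _ y0 nx; rewrite (negbTE y0D) inE eq_sym (negbTE ne0) /=.
  by rewrite (negbTE nexy).
Qed.

End F.

Theorem theorem4p4 (T : finType) (e : rel T) :
  simple_graph e -> (iso_unique_grundy e <-> components_complete e).
Proof.
move=> [es ei]; split; first exact: forward.
move=> cc; exact: backward.
Qed.
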